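(* Let $\mathcal C_Q$ be a multiplicative cyclic group of order $Q$, let $n$ be a divisor of $Q$ and $r$ a divisor of $Q/n$. For $h\in\mathcal C_Q$ define $$\mathbb I_{r,n}(h):=\frac{\phi(r)}{rn}\sum_{t\mid rn}\frac{\mu(t_{(n)})}{\phi(t_{(n)})}\sum_{\mathrm{ord}(\eta)=t}\eta(h),$$ where the inner sum runs over the characters $\eta$ of $\mathcal C_Q$ of order exactly $t$. Then $\mathbb I_{r,n}(h)=1$ if $h$ is $(r,n)$-free, and $\mathbb I_{r,n}(h)=0$ otherwise.
   Context: A character of $\mathcal C_Q$ is a group homomorphism $\eta:\mathcal C_Q\to\mathbb C^*$; its order $\mathrm{ord}(\eta)$ is the least positive integer $k$ with $\eta(h)^k=1$ for all $h\in\mathcal C_Q$. For positive integers $a,b$, $a_{(b)}:=a/\gcd(a,b)$; $\mu$ is the Möbius function and $\phi$ is Euler's totient function. Let $\mathcal C_{Q/n}$ denote the unique subgroup of $\mathcal C_Q$ of order $Q/n$. An element $h\in\mathcal C_Q$ is called $(r,n)$-free if (i) $\mathrm{ord}(h)$ divides $Q/n$, i.e. $h\in\mathcal C_{Q/n}$, and (ii) $h$ is $r$-free in $\mathcal C_{Q/n}$, i.e. whenever $h=g^s$ with $g\in\mathcal C_{Q/n}$ and $s\mid r$, then $s=1$. *)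

(* Defs.v *)
From HB Require Import structures.
From mathcomp Require Import all_boot all_order all_algebra all_fingroup all_solvable all_field all_character.
Set Implicit Arguments. Unset Strict Implicit. Unset Printing Implicit Defensive.
Import GRing.Theory Num.Theory.

Definition mobius (m : nat) : int :=
  if all (fun p => logn p m == 1%N) (primes m) then ((-1) ^+ size (primes m))%R else 0%R.

(* a_(b) := a / gcd(a, b) *)
Definition natpart (a b : nat) : nat := (a %/ gcdn a b)%N.

(* h is (r,n)-free in G (cyclic of order Q): h lies in the (unique) subgroup
   C_{Q/n} of order Q/n and is r-free in it. *)
Definition rn_free (gT : finGroupType) (G : {group gT}) (Q r n : nat) (h : gT) : Prop :=
  forall H : {group gT}, H \subset G -> #|H| = (Q %/ n)%N ->
    h \in H /\ (forall (g : gT) (s : nat), g \in H -> (s %| r)%N -> h = (g ^+ s)%g -> s = 1%N).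

(* I_{r,n}(h); characters of the abelian group G are its linear
   (irreducible) characters, ord(eta) = #[eta]%CF. *)
Definition Irn (gT : finGroupType) (G : {group gT}) (r n : nat) (h : gT) : algC :=
  ((totient r)%:R / (r * n)%:R *
   \sum_(t <- divisors (r * n))
      ((mobius (natpart t n))%:~R / (totient (natpart t n))%:R *
       \sum_(i : Iirr G | ('chi[G]_i \is a linear_char) && (#['chi_i]%CF == t))
          'chi_i h))%R.

(* Main.v *)
Require Import Defs.
From mathcomp Require Import all_boot all_order all_algebra all_fingroup all_solvable all_field all_character.
From mathcomp Require Import zify ring.
Set Implicit Arguments. Unset Strict Implicit. Unset Printing Implicit Defensive.
Import GRing.Theory Num.Theory.

Lemma mobius1 : mobius 1 = 1%R.
Proof. by []. Qed.

Lemma mobiusM a b : 0 < a -> 0 < b -> coprime a b ->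
  mobius (a * b) = (mobius a * mobius b)%R.
Proof.
move=> a0 b0 cab.
have hp : perm_eq (primes (a * b)) (primes a ++ primes b).
  apply: uniq_perm; first exact: primes_uniq.
    rewrite cat_uniq !primes_uniq /= andbT.
    by rewrite -coprime_has_primes.
  by move=> p; rewrite mem_cat primesM.
have nb p : p \in primes a -> logn p b = 0.
  move=> pa; apply/eqP; rewrite eqn0Ngt logn_gt0; apply/negP => pb.
  move: cab; rewrite coprime_has_primes // => /hasPn /(_ p pb); by rewrite pa.
have na p : p \in primes b -> logn p a = 0.
  move=> pb; apply/eqP; rewrite eqn0Ngt logn_gt0; apply/negP => pa.
  by move: (nb p pa) pb; rewrite -logn_gt0 => ->.
rewrite /mobius (perm_all _ hp) all_cat (perm_size hp) size_cat.
have -> : all (fun p => logn p (a * b) == 1) (primes a) = all (fun p => logn p a == 1) (primes a).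
  by apply: eq_in_all => p pa; rewrite lognM // nb // addn0.
have -> : all (fun p => logn p (a * b) == 1) (primes b) = all (fun p => logn p b == 1) (primes b).
  by apply: eq_in_all => p pb; rewrite lognM // na.
case: (all _ (primes a)); case: (all _ (primes b)); rewrite ?mulr0 ?mul0r //.
by rewrite exprD.
Qed.

Lemma mobius_pX p i : prime p ->
  mobius (p ^ i) = if i == 0 then 1%R else if i == 1 then (-1)%R else 0%R.
Proof.
move=> pp; case: i => [|i] //=.
rewrite /mobius primesX // primes_prime //= pfactorK // andbT.
by case: i.
Qed.
Lemma sum_divisorsM (F : nat -> algC) a b : 0 < a -> 0 < b -> coprime a b ->
  (\sum_(d <- divisors (a * b)) F d =
   \sum_(d1 <- divisors a) \sum_(d2 <- divisors b) F (d1 * d2)%N)%R.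
Proof.
move=> a0 b0 cab.
rewrite -(@big_allpairs_dep _ _ _ _ (fun _ => nat) _ (fun d1 d2 => d1 * d2) (divisors a) (fun _ => divisors b) F) /=.
apply: perm_big; apply: uniq_perm; first exact: divisors_uniq.
  apply: allpairs_uniq; try exact: divisors_uniq.
  move=> [x1 x2] [y1 y2] /allpairsP[[u1 u2] /= [hu1 hu2 [-> ->]]].
  move=> /allpairsP[[v1 v2] /= [hv1 hv2 [-> ->]]] /= e.
  move: hu1 hu2 hv1 hv2; rewrite -!dvdn_divisors // => hu1 hu2 hv1 hv2.
  have c1 : coprime u2 a by apply: (coprime_dvdl hu2); rewrite coprime_sym.
  have c2 : coprime v2 a by apply: (coprime_dvdl hv2); rewrite coprime_sym.
  have e1 : u1 = v1.
    have := congr1 (gcdn ^~ a) e; rewrite /= ![gcdn (_ * _) a]gcdnC.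
    rewrite !Gauss_gcdl ?(coprime_sym a) // ![gcdn a _]gcdnC.
    by rewrite (gcdn_idPl hu1) (gcdn_idPl hv1).
  subst v1; congr (_, _); apply/eqP.
  have u1p : 0 < u1 := dvdn_gt0 a0 hu1.
  by rewrite -(eqn_pmul2l u1p) e.
move=> d; apply/idP/allpairsP => [|[[x1 x2] /= [h1 h2 ->]]]; last first.
  move: h1 h2; rewrite -!dvdn_divisors ?muln_gt0 ?a0 ?b0 // => h1 h2.
  exact: dvdn_mul.
rewrite -dvdn_divisors ?muln_gt0 ?a0 //= => dab.
exists (gcdn d a, gcdn d b) => /=; rewrite -!dvdn_divisors ?dvdn_gcdr //.
split=> //; apply/eqP; rewrite eqn_dvd; apply/andP; split.
  rewrite muln_gcdl (muln_gcdr d) (muln_gcdr a) !dvdn_gcd dab.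
  by rewrite (dvdn_mulr _ (dvdnn d)) (dvdn_mulr _ (dvdnn d)) (dvdn_mull _ (dvdnn d)).
rewrite Gauss_dvd ?dvdn_gcdl //.
apply: (coprime_dvdl (dvdn_gcdr _ _)); apply: (coprime_dvdr (dvdn_gcdr _ _)) => //.
Qed.

Lemma sum_divisors_pX (F : nat -> algC) p k : prime p ->
  (\sum_(d <- divisors (p ^ k)) F d = \sum_(i < k.+1) F (p ^ i)%N)%R.
Proof.
move=> pp; rewrite -(big_mkord xpredT (fun i => F (p ^ i)%N)) -(big_map (expn p) xpredT F).
apply: perm_big; apply: uniq_perm; first exact: divisors_uniq.
  rewrite map_inj_uniq ?iota_uniq //; apply: expnI; exact: prime_gt1.
move=> d; rewrite -dvdn_divisors ?expn_gt0 ?prime_gt0 //.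
apply/dvdn_pfactor/mapP => // [[m mk ->]|[m]].
  by exists m => //; rewrite mem_iota.
by rewrite mem_iota /= add0n ltnS => mk ->; exists m.
Qed.

Lemma sum_pX_mob (H : nat -> algC) p k : prime p -> 0 < k ->
  (\sum_(i < k.+1) (mobius (p ^ i)%N)%:~R * H i = H 0 - H 1)%R.
Proof.
move=> pp; case: k => // k _.
rewrite !big_ord_recl big1 ?addr0 => [|i _].
  by rewrite !mobius_pX //= mul1r mulN1r.
by rewrite mobius_pX //= mul0r.
Qed.

Lemma split_prime r : 1 < r -> exists p k r',
  [/\ prime p, 0 < k, 0 < r', coprime (p ^ k) r' & r = p ^ k * r'].
Proof.
move=> r1; have r0 : 0 < r by apply: ltnW.
exists (pdiv r), (logn (pdiv r) r), r`_(pdiv r)^'.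
have pp := pdiv_prime r1.
split=> //.
- by rewrite logn_gt0 mem_primes pp r0 pdiv_dvd.
- by rewrite -p_part coprime_partC.
- by rewrite -p_part partnC.
Qed.

Lemma dvd_split d a b : coprime a b -> d %| a * b -> d = gcdn d a * gcdn d b.
Proof.
move=> cab dab; apply/eqP; rewrite eqn_dvd; apply/andP; split.
  rewrite muln_gcdl (muln_gcdr d) (muln_gcdr a) !dvdn_gcd dab.
  by rewrite (dvdn_mulr _ (dvdnn d)) (dvdn_mulr _ (dvdnn d)) (dvdn_mull _ (dvdnn d)).
rewrite Gauss_dvd ?dvdn_gcdl //.
apply: (coprime_dvdl (dvdn_gcdr _ _)); apply: (coprime_dvdr (dvdn_gcdr _ _)) => //.
Qed.

Lemma mobius_sum r : 0 < r ->
  (\sum_(d <- divisors r) (mobius d)%:~R = (r == 1%N)%:R :> algC)%R.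
Proof.
move=> r0; case: (ltngtP r 1) => [|r1|->]; first by case: r r0.
  have [p [k [r' [pp k0 r'0 cp ->]]]] := split_prime r1.
  have pk0 : 0 < p ^ k by rewrite expn_gt0 prime_gt0.
  rewrite sum_divisorsM //.
  rewrite (@sum_divisors_pX (fun d1 => (\sum_(d2 <- divisors r') (mobius (d1 * d2)%N)%:~R)%R)) //.
  transitivity (\sum_(i < k.+1) (mobius (p ^ i)%N)%:~R * \sum_(d2 <- divisors r') (mobius d2)%:~R : algC)%R.
    apply: eq_bigr => i _; rewrite big_distrr /=; apply: eq_big_seq => d2.
    rewrite -dvdn_divisors // => d2r.
    rewrite mobiusM ?expn_gt0 ?(prime_gt0 pp) ?(dvdn_gt0 r'0 d2r) ?intrM //.
    have cpr : coprime p r' by apply: (coprime_dvdl _ cp); apply: dvdn_exp.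
    by apply: coprimeXl; apply: (coprime_dvdr d2r cpr).
  by rewrite (@sum_pX_mob (fun _ => \sum_(d2 <- divisors r') (mobius d2)%:~R)%R p k pp k0) subrr.
by rewrite /= big_seq1 mobius1.
Qed.

Lemma mob_sum2 r e : 0 < r -> e %| r ->
  (\sum_(d <- divisors r | (e %| d)%N) (mobius d)%:~R / d%:R
    = (totient r)%:R / r%:R * ((mobius e)%:~R / (totient e)%:R) :> algC)%R.
Proof.
elim/ltn_ind: r e => r IH e r0 er.
case: (ltngtP r 1) => [|r1|r1]; first by case: r r0 {IH er}.
  have [p [k [r' [pp k0 r'0 cp dr]]]] := split_prime r1.
  have pk0 : 0 < p ^ k by rewrite expn_gt0 prime_gt0.
  have p0 : 0 < p := prime_gt0 pp.
  have r'r : r' < r by rewrite dr -{1}(mul1n r') ltn_pmul2r // -(expn0 p) ltn_exp2l ?prime_gt1.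
  have de : e = (gcdn e (p ^ k) * gcdn e r')%N by apply: dvd_split cp _; rewrite -dr.
  set e1 := gcdn e (p ^ k) in de; set e2 := gcdn e r' in de.
  have [j jk e1E] : exists2 j, j <= k & e1 = (p ^ j)%N.
    by apply/dvdn_pfactor => //; apply: dvdn_gcdr.
  have e2r : e2 %| r' by apply: dvdn_gcdr.
  have e20 : 0 < e2 := dvdn_gt0 r'0 e2r.
  have cpr : coprime p r' by apply: (coprime_dvdl _ cp); apply: dvdn_exp.
  have ce : coprime (p ^ j) e2 by apply: coprimeXl; apply: (coprime_dvdr e2r cpr).
  rewrite dr big_mkcond sum_divisorsM //.
  rewrite (@sum_divisors_pX (fun d1 => (\sum_(d2 <- divisors r') (if (e %| d1 * d2)%N then (mobius (d1 * d2)%N)%:~R / (d1 * d2)%N%:R else 0))%R)) //.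
  transitivity ((\sum_(i < k.+1) (mobius (p ^ i)%N)%:~R * ((j <= i)%:R / (p ^ i)%N%:R)) *
     ((totient r')%:R / r'%:R * ((mobius e2)%:~R / (totient e2)%:R)) : algC)%R.
    rewrite -(IH r' r'r e2 r'0 e2r) big_distrl /=; apply: eq_bigr => i _.
    rewrite big_distrr /= [in RHS]big_mkcond; apply: eq_big_seq => d2.
    rewrite -dvdn_divisors // => d2r.
    have cid : coprime (p ^ i) d2 by apply: coprimeXl; apply: (coprime_dvdr d2r cpr).
    have cjd : coprime (p ^ j) d2 by apply: coprimeXl; apply: (coprime_dvdr d2r cpr).
    have c2i : coprime e2 (p ^ i) by rewrite coprime_sym; apply: coprimeXl; apply: (coprime_dvdr e2r cpr).
    rewrite de e1E Gauss_dvd // Gauss_dvdl // Gauss_dvdr // dvdn_Pexp2l ?prime_gt1 //.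
    rewrite mobiusM ?expn_gt0 ?p0 ?(dvdn_gt0 r'0 d2r) // intrM natrM.
    case: (j <= i); case: (e2 %| d2); rewrite /= ?mulr0 ?mul0r ?mulr1 ?mulr0 ?mul0r //.
    by rewrite invfM; ring.
  rewrite (eq_bigr (fun i : 'I_k.+1 => (mobius (p ^ i)%N)%:~R * (fun m : nat => ((j <= m)%:R / (p ^ m)%N%:R)%R) i)%R) //.
  have h := sum_pX_mob (fun m => ((j <= m)%:R / (p ^ m)%N%:R)%R) pp k0.
  apply: (etrans (congr1 (fun x => x * _)%R h)) => /=.
  rewrite totient_coprime // totient_pfactor // de e1E mobiusM ?expn_gt0 ?p0 // intrM.
  rewrite totient_coprime //.
  clear h; rewrite mobius_pX //.
  have pR : (p%:R : algC)%R != 0%R by rewrite pnatr_eq0 -lt0n.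
  have p1R : (p%:R - 1 : algC)%R != 0%R.
    by rewrite subr_eq0 pnatr_eq1; have := prime_gt1 pp; lia.
  have r'R : (r'%:R : algC)%R != 0%R by rewrite pnatr_eq0 -lt0n.
  have t2R : ((totient e2)%:R : algC)%R != 0%R by rewrite pnatr_eq0 -lt0n totient_gt0.
  case: k k0 jk {pk0 cp dr e1 de e1E} => // k _ jk.
  rewrite /= !natrM !natrX -subn1 natrB // exprS.
  case: j jk ce => [|[|j]] jk ce /=.
  - rewrite (expn0 p) expr0 expr1 /=.
    have -> : totient 1 = 1%N by [].
    field; rewrite ?pR ?r'R ?t2R ?expf_neq0 //.
  - have -> : totient (p ^ 1) = p.-1 by rewrite expn1 totient_prime.
    rewrite -subn1 natrB // expr0 expr1.
    field; rewrite ?pR ?r'R ?t2R ?p1R ?expf_neq0 //.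
  - by rewrite ?mul0r ?subrr ?mul0r ?mulr0 ?mul0r ?mulr0.
subst r; move: er; rewrite dvdn1 => /eqP ->.
have -> : divisors 1 = [:: 1%N] by [].
by rewrite big_mkcond big_seq1 /= mobius1 /= !divr1 ?mulr1 // ?divr1.
Qed.

Lemma natpart_dvd t n d : 0 < n -> (t %| d * n) = (natpart t n %| d).
Proof.
move=> n0; rewrite /natpart; set g := gcdn t n.
have g0 : 0 < g by rewrite gcdn_gt0 n0 orbT.
have tE : t = (t %/ g * g)%N by rewrite divnK // dvdn_gcdl.
have nE : n = (n %/ g * g)%N by rewrite divnK // dvdn_gcdr.
have cop : coprime (t %/ g) (n %/ g).
  rewrite /coprime -(eqn_pmul2r g0) mul1n muln_gcdl -tE -nE //.
rewrite {1}tE {1}nE mulnA dvdn_pmul2r // Gauss_dvdl //.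
Qed.

Lemma mob_sum3 r n t : 0 < r -> 0 < n -> t %| r * n ->
  ((totient r)%:R / r%:R * ((mobius (natpart t n))%:~R / (totient (natpart t n))%:R)
   = \sum_(d <- divisors r | (t %| d * n)%N) (mobius d)%:~R / d%:R :> algC)%R.
Proof.
move=> r0 n0 trn.
rewrite (eq_bigl (fun d => natpart t n %| d)) => [|d]; last by rewrite natpart_dvd.
by rewrite mob_sum2 // -natpart_dvd.
Qed.
Lemma param gT (G : {group gT}) x (eps : algC) :
  G :=: <[x]>%g -> (#[x]%g.-primitive_root eps)%R ->
  {g : Iirr G -> 'I_#[x]%g | bijective g &
     forall i, ('chi_i x = eps ^+ g i)%R}.
Proof.
move=> hG pe.
have xG : x \in G by rewrite hG cycle_id.
have cycG : cyclic G by apply/cyclicP; exists x.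
have e1 i : ('chi[G]_i x ^+ #[x]%g = 1)%R.
  by rewrite -lin_charX ?irr_cyclic_lin // expg_order lin_char1 ?irr_cyclic_lin.
exists (fun i => sval (prim_rootP pe (e1 i))); last first.
  by move=> i; case: (prim_rootP pe (e1 i)).
apply: inj_card_bij; last by rewrite card_ord card_Iirr_cyclic // hG orderE.
move=> i j /= hij.
have hx : ('chi[G]_i x = 'chi[G]_j x)%R.
  case: (prim_rootP pe (e1 i)) hij => /= k ->; case: (prim_rootP pe (e1 j)) => /= l -> ->.
  by [].
apply: irr_inj; apply: cfun_inP => y yG; have : y \in <[x]>%g by rewrite -hG.
case/cycleP => m ->.
by rewrite !lin_charX ?irr_cyclic_lin // hx.
Qed.

Lemma param_ord gT (G : {group gT}) x (eps : algC) (i : Iirr G) (k : nat) D :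
  G :=: <[x]>%g -> (#[x]%g.-primitive_root eps)%R -> ('chi_i x = eps ^+ k)%R ->
  (#[('chi_i)%R]%CF %| D) = (#[x]%g %| k * D).
Proof.
move=> hG pe hk.
have xG : x \in G by rewrite hG cycle_id.
have cycG : cyclic G by apply/cyclicP; exists x.
have lin := irr_cyclic_lin i cycG.
apply/dvdn_cforderP/idP => [H|H y].
  by rewrite (prim_order_dvd pe) exprM -hk H.
move=> yG; have : y \in <[x]>%g by rewrite -hG.
case/cycleP => m ->.
rewrite lin_charX // hk -!exprM (mulnC m) mulnA exprM.
by move: H; rewrite (prim_order_dvd pe) => /eqP ->; apply: expr1n.
Qed.
Lemma sum_mult (F : nat -> algC) c D : 0 < c ->
  (\sum_(0 <= k < c * D | (c %| k)%N) F k = \sum_(0 <= j < D) F (c * j)%N)%R.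
Proof.
move=> c0; elim: D => [|D IH]; first by rewrite muln0 !big_geq.
rewrite mulnS addnC (@big_cat_nat _ _ _ (c * D)) ?leq_addr //= IH.
rewrite big_nat_recr //=; congr (_ + _)%R.
rewrite big_ltn_cond /=; last lia.
rewrite (dvdn_mulr _ (dvdnn c)) big1_seq ?addr0 // => k /andP [ck].
rewrite mem_index_iota => /andP [h1 h2]; exfalso.
have [s hs] : exists s, k = (c * D + s)%N by exists (k - c * D)%N; lia.
move: ck; rewrite hs dvdn_addr ?(dvdn_mulr _ (dvdnn c)) // => /dvdn_leq.
move: h1 h2; rewrite hs; lia.
Qed.

Lemma geom (z : algC) D a : (D.-primitive_root z)%R -> 0 < D ->
  (\sum_(j < D) z ^+ (j * a) = (D %| a)%:R * D%:R)%R.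
Proof.
move=> pz D0.
have [Da|nDa] := boolP (D %| a).
  rewrite mul1r (eq_bigr (fun _ => 1%R)) => [|j _].
    by rewrite sumr_const card_ord.
  rewrite mulnC exprM; move: Da; rewrite (prim_order_dvd pz) => /eqP ->.
  exact: expr1n.
rewrite mul0r.
have z1 : (z ^+ a != 1)%R by rewrite -(prim_order_dvd pz).
have zD : ((z ^+ a) ^+ D = 1)%R.
  by rewrite -exprM mulnC exprM (prim_expr_order pz) expr1n.
have := subrX1 (z ^+ a) D; rewrite zD subrr => /esym /eqP; rewrite mulf_eq0 subr_eq0 (negbTE z1) /= => /eqP S.
transitivity (\sum_(i < D) (z ^+ a) ^+ i)%R; last exact: S.
by apply: eq_bigr => j _; rewrite mulnC exprM.
Qed.

Lemma rootsum (eps : algC) Q D a : (Q.-primitive_root eps)%R -> D %| Q -> 0 < D ->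
  (\sum_(k < Q | (Q %| k * D)%N) eps ^+ (k * a) = D%:R * (D %| a)%:R)%R.
Proof.
move=> pe DQ D0.
have Q0 : 0 < Q := prim_order_gt0 pe.
have [c QE] : exists c, Q = (c * D)%N by exists (Q %/ D); rewrite divnK.
have cE : Q %/ D = c by rewrite QE mulnK.
have c0 : 0 < c by move: Q0; rewrite QE muln_gt0 => /andP[].
rewrite -(big_mkord (fun k => Q %| k * D) (fun k => eps ^+ (k * a))%R).
rewrite (eq_bigl (fun k => c %| k)) => [|k]; last by rewrite {1}QE dvdn_pmul2r.
rewrite {1}QE sum_mult // big_mkord.
rewrite (eq_bigr (fun j : 'I_D => (eps ^+ c) ^+ (j * a))%R) => [|j _]; last by rewrite -exprM mulnA.
rewrite geom ?(mulrC (D%:R)%R) // -cE dvdn_prim_root //.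
Qed.

Lemma charsum gT (G : {group gT}) x D a : G :=: <[x]>%g -> D %| #[x]%g -> 0 < D ->
  (\sum_(i : Iirr G | (#[('chi_i)%R]%CF %| D)%N) 'chi_i (x ^+ a)%g = D%:R * (D %| a)%N%:R)%R.
Proof.
move=> hG DQ D0.
have [eps pe] := C_prim_root_exists (order_gt0 x).
have [g bij hg] := param hG pe.
have xG : x \in G by rewrite hG cycle_id.
have cycG : cyclic G by apply/cyclicP; exists x.
rewrite (eq_bigl (fun i => #[x]%g %| g i * D)) => [|i]; last by rewrite (param_ord _ hG pe (hg i)).
rewrite (eq_bigr (fun i => eps ^+ (g i * a))%R) => [|i _]; last first.
  by rewrite lin_charX ?irr_cyclic_lin // hg exprM.
rewrite -(rootsum a pe DQ D0).
by rewrite (reindex g) //; apply: onW_bij.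
Qed.
Lemma mod_dvd_transfer n Q a b : n %| Q -> a = b %[mod Q] -> n %| b -> n %| a.
Proof.
move=> nQ e; rewrite /dvdn -(modn_dvdm a nQ) e (modn_dvdm b nQ); exact.
Qed.

Lemma free_char gT (G : {group gT}) x Q r n a :
  G :=: <[x]>%g -> #[x]%g = Q -> n %| Q -> r %| Q %/ n ->
  rn_free G Q r n (x ^+ a)%g <-> (n %| a) && coprime (a %/ n) r.
Proof.
move=> hG oQ nQ rQ.
have Q0 : 0 < Q by rewrite -oQ order_gt0.
have n0 : 0 < n := dvdn_gt0 Q0 nQ.
have xG : x \in G by rewrite hG cycle_id.
have cycG : cyclic G by apply/cyclicP; exists x.
pose H0 := <[x ^+ n]>%G.
have H0G : H0 \subset G by rewrite cycle_subG groupX.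
have cH0 : #|H0| = Q %/ n by rewrite /= -orderE orderXdiv oQ.
split.
  move=> F; have [hin hcond] := F H0 H0G cH0.
  have na : n %| a.
    move: hin => /cycleP [j]; rewrite -expgM => /eqP; rewrite eq_expg_mod_order oQ => /eqP e.
    by apply: (mod_dvd_transfer nQ e); apply: dvdn_mulr.
  rewrite na /= /coprime; apply/eqP.
  set b := a %/ n; set s := gcdn b r.
  apply: (hcond ((x ^+ n) ^+ (b %/ s))%g s); first exact: mem_cycle.
    exact: dvdn_gcdr.
  rewrite -!expgM divnK ?dvdn_gcdl // mulnC divnK //.
move=> /andP [na cop] H HG cH.
have HE : H = H0 by apply: val_inj; apply/eqP; rewrite (eq_subG_cyclic cycG HG H0G) cH cH0.
subst H; split.
  by rewrite -(divnK na) mulnC expgM mem_cycle.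
move=> g s /cycleP [j ->] sr; rewrite -!expgM => /eqP.
rewrite eq_expg_mod_order oQ => /eqP e.
set M := Q %/ n.
have QE : Q = (M * n)%N by rewrite divnK.
have e2 : a %/ n = j * s %[mod M].
  apply/eqP; rewrite -(eqn_pmul2r n0) !muln_modl -QE divnK //.
  by rewrite e mulnC.
have sM : s %| M := dvdn_trans sr rQ.
have sb : s %| a %/ n by apply: (mod_dvd_transfer sM e2); apply: dvdn_mull.
by apply/eqP; rewrite -dvdn1 -(eqP cop) dvdn_gcd sb.
Qed.

Lemma sum_pred1 (s : seq nat) (y : nat) (c : algC) : uniq s ->
  (\sum_(t <- s) (if y == t then c else 0) = if y \in s then c else 0)%R.
Proof.
elim: s => [|t s IH] /=; first by rewrite big_nil.
move=> /andP [ts us]; rewrite big_cons IH // in_cons.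
case: (eqVneq y t) => [->|_] /=; last by rewrite add0r.
by rewrite (negbTE ts) addr0.
Qed.

Lemma mob_div_sum r b : 0 < r ->
  (\sum_(d <- divisors r) (mobius d)%:~R * (d %| b)%N%:R = (coprime b r)%:R :> algC)%R.
Proof.
move=> r0.
rewrite (eq_bigr (fun d => if (d %| b)%N then (mobius d)%:~R else 0)%R) => [|d _]; last first.
  by case: (d %| b)%N; rewrite ?mulr1 ?mulr0.
rewrite -big_mkcond -big_filter.
have g0 : 0 < gcdn r b by rewrite gcdn_gt0 r0.
rewrite (perm_big (divisors (gcdn r b))).
  by rewrite mobius_sum // /coprime gcdnC.
apply: uniq_perm; rewrite ?filter_uniq ?divisors_uniq // => d.
by rewrite mem_filter -!dvdn_divisors // dvdn_gcd andbC.
Qed.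

Unset Implicit Arguments. Set Strict Implicit.

Theorem proposition3p6 (gT : finGroupType) (G : {group gT}) (Q n r : nat) (h : gT) :
  cyclic G -> #|G| = Q -> (n %| Q)%N -> (r %| Q %/ n)%N -> h \in G ->
  (rn_free G Q r n h -> Irn G r n h = 1%R) /\
  (~ rn_free G Q r n h -> Irn G r n h = 0%R).
Proof.
move=> cycG oG nQ rQ hG.
have [x hx] := cyclicP cycG.
have oQ : #[x]%g = Q by rewrite orderE -hx oG.
have Q0 : 0 < Q by rewrite -oG cardG_gt0.
have n0 : 0 < n := dvdn_gt0 Q0 nQ.
have r0 : 0 < r by apply: (dvdn_gt0 _ rQ); rewrite divn_gt0 // dvdn_leq.
have [a ha] : exists a, h = (x ^+ a)%g by apply/cycleP; rewrite -hx.
subst h.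
suff key : Irn G r n (x ^+ a)%g = (((n %| a) && coprime (a %/ n) r)%N%:R)%R.
  rewrite key; split.
    by move/(free_char a hx oQ nQ rQ) => ->.
  by move=> nf; case: ((n %| a) && coprime (a %/ n) r) (free_char a hx oQ nQ rQ) => // - [_ /(_ isT)].
have lin i : ('chi[G]_i \is a linear_char)%R by apply: irr_cyclic_lin.
have hxs : G :=: <[x]>%g by rewrite hx.
pose X i := ('chi[G]_i (x ^+ a)%g)%R.
pose o i := #[('chi[G]_i)%R]%CF.
pose w t := ((mobius (natpart t n))%:~R / (totient (natpart t n))%:R : algC)%R.
have rn0 : 0 < r * n by rewrite muln_gt0 r0 n0.
rewrite /Irn.
transitivity ((totient r)%:R / (r * n)%:R * \sum_(i : Iirr G) (if (o i %| r * n)%N then w (o i) * X i else 0) : algC)%R.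
  congr (_ * _)%R.
  transitivity (\sum_(t <- divisors (r * n)) \sum_(i : Iirr G) (if o i == t then w (o i) * X i else 0) : algC)%R.
    apply: eq_bigr => t _; rewrite big_distrr big_mkcond /=; apply: eq_bigr => i _.
    rewrite lin /=; case: (eqVneq (o i) t) => [<-|]; by rewrite ?mulr0.
  rewrite exchange_big; apply: eq_bigr => i _.
  by rewrite sum_pred1 ?divisors_uniq // -dvdn_divisors.
have nR : (n%:R : algC)%R != 0%R by rewrite pnatr_eq0 -lt0n.
have rR : (r%:R : algC)%R != 0%R by rewrite pnatr_eq0 -lt0n.
transitivity ((n%:R)^-1 * \sum_(d <- divisors r) (mobius d)%:~R / d%:R * \sum_(i : Iirr G | (o i %| d * n)%N) X i : algC)%R.
  rewrite big_distrr /=.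
  transitivity (\sum_(i : Iirr G) (n%:R)^-1 * \sum_(d <- divisors r | (o i %| d * n)%N) (mobius d)%:~R / d%:R * X i : algC)%R.
    apply: eq_bigr => i _; case: ifP => oi.
      rewrite -big_distrl /= -mob_sum3 // natrM /w.
      by rewrite invfM; ring.
    rewrite big1_seq ?mulr0 // => d /andP [od]; rewrite -dvdn_divisors // => dr.
    by move: oi; rewrite (dvdn_trans od) // dvdn_mul.
  rewrite -big_distrr /=; congr (_ * _)%R.
  rewrite (eq_bigr (fun i => \sum_(d <- divisors r) (if (o i %| d * n)%N then (mobius d)%:~R / d%:R * X i else 0))%R) => [|i _]; last by rewrite big_mkcond.
  rewrite exchange_big; apply: eq_bigr => d _.
  by rewrite big_distrr [in RHS]big_mkcond; apply: eq_bigr => i _; case: ifP; rewrite ?mulr0.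
rewrite big_distrr /=.
transitivity (\sum_(d <- divisors r) (mobius d)%:~R * (d * n %| a)%N%:R : algC)%R.
  apply: eq_big_seq => d; rewrite -dvdn_divisors // => dr.
  have d0 : 0 < d := dvdn_gt0 r0 dr.
  have dR : (d%:R : algC)%R != 0%R by rewrite pnatr_eq0 -lt0n.
  have dnQ : d * n %| #[x]%g by rewrite oQ -(divnK nQ) dvdn_mul // (dvdn_trans dr rQ).
  rewrite (charsum a hxs dnQ) ?muln_gt0 ?d0 ?n0 // natrM.
  by field; rewrite dR nR.
case na : (n %| a)%N => /=.
  rewrite -(mob_div_sum (a %/ n) r0); apply: eq_bigr => d _.
  by rewrite -{1}(divnK na) dvdn_pmul2r.
rewrite big1_seq // => d _.
have -> : (d * n %| a)%N = false by apply/negP => /(dvdn_trans (dvdn_mull d (dvdnn n))); rewrite na.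
by rewrite mulr0.
Qed.
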